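(* Let $L$ be a Lie algebra over a field, $I$ an ideal of $L$, $s\in L$, and $k\ge2$ such that $[Is^k]=(0)$. Then for every integer $t\ge2$ and all elements $a_1,\dots,a_N\in I$, where $N=kt-1$, the operator $\operatorname{ad}([a_1s^{k-1}])\cdots\operatorname{ad}([a_Ns^{k-1}])$ on $L$ is a linear combination of operators of the form \[P'\,\operatorname{ad}(s)^{k-1}\prod_{j=0}^{t-2}\big(\operatorname{ad}(a_{i+j})\operatorname{ad}(s)^{k-1}\big)\,P'',\] where $i$ is an index with $1\le i$ and $i+t-2\le N$, and $P',P''$ are (possibly empty) products of the operators $\operatorname{ad}(a_1),\dots,\operatorname{ad}(a_N),\operatorname{ad}(s)$.
   Context: $[a,b,c,\dots]$ denotes the left-normed commutator $[\cdots[[a,b],c],\dots]$, and $[ab^k]=[a,b,\dots,b]$ with $b$ repeated $k$ times; $[Is^k]$ denotes the set $\{[as^k]:a\in I\}$. $\operatorname{ad}(a)$ is the operator $x\mapsto[x,a]$; operators act on the right, so a product $uv$ of operators means first $u$ then $v$. *)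

(* Defs.v *)
From HB Require Import structures.
From mathcomp Require Import all_boot all_order all_algebra.
From Stdlib Require List.
Set Implicit Arguments. Unset Strict Implicit. Unset Printing Implicit Defensive.
Import GRing.Theory.
Local Open Scope ring_scope.

Definition is_lie_bracket (K : fieldType) (L : lmodType K) (br : L -> L -> L) : Prop :=
  [/\ (forall (c : K) (x y z : L), br (c *: x + y) z = c *: br x z + br y z),
      (forall (c : K) (x y z : L), br z (c *: x + y) = c *: br z x + br z y),
      (forall x : L, br x x = 0) &
      (forall x y z : L, br (br x y) z + br (br y z) x + br (br z x) y = 0)].

Definition is_lie_ideal (K : fieldType) (L : lmodType K) (br : L -> L -> L)
    (I : L -> Prop) : Prop :=
  [/\ I 0,
      (forall (c : K) (x y : L), I x -> I y -> I (c *: x + y)) &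
      (forall x y : L, I x -> I (br x y))].

Definition ad (K : fieldType) (L : lmodType K) (br : L -> L -> L) (a : L) : L -> L :=
  fun x => br x a.

(* [a b^k] = [a, b, ..., b] (b repeated k times, left-normed) *)
Definition comm_pow (K : fieldType) (L : lmodType K) (br : L -> L -> L)
    (a b : L) (k : nat) : L :=
  iter k (fun x => br x b) a.

(* Product of operators acting on the right: opprod [:: u1; ...; un] applies
   u1 first, then u2, ..., then un. *)
Definition opprod (T : Type) (s : seq (T -> T)) : T -> T :=
  fun x => foldl (fun y f => f y) x s.

Definition special_op (K : fieldType) (L : lmodType K) (br : L -> L -> L)
    (s : L) (a : nat -> L) (k t N : nat) (op : L -> L) : Prop :=
  exists (i : nat) (P1 P2 : seq (L -> L)),
    [/\ 1 <= i, i + t - 2 <= N,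
        (forall u, List.In u P1 -> (u = ad br s \/ exists m, 1 <= m <= N /\ u = ad br (a m))),
        (forall u, List.In u P2 -> (u = ad br s \/ exists m, 1 <= m <= N /\ u = ad br (a m))) &
        op = opprod (P1 ++ nseq (k - 1) (ad br s)
                     ++ flatten [seq ad br (a (i + j)) :: nseq (k - 1) (ad br s)
                                | j <- iota 0 (t - 1)]
                     ++ P2)]%N.

Definition lin_comb_of (K : fieldType) (L : lmodType K) (P : (L -> L) -> Prop)
    (op : L -> L) : Prop :=
  exists (n : nat) (c : 'I_n -> K) (ops : 'I_n -> (L -> L)),
    (forall j, P (ops j)) /\ (forall x, op x = \sum_(j < n) c j *: ops j x).

(* Main.v *)
Require Import Defs.
From mathcomp Require Import all_boot all_order all_algebra.
From Stdlib Require Import Classical FunctionalExtensionality.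
From mathcomp Require Import zify.
Set Implicit Arguments. Unset Strict Implicit. Unset Printing Implicit Defensive.
Import GRing.Theory.
Local Open Scope ring_scope.


Definition LC (K : fieldType) (L : lmodType K) (P : (L -> L) -> Prop) (f : L -> L) :=
  exists l : seq (K * (L -> L)),
    (forall q, List.In q l -> P q.2) /\ forall x, f x = \sum_(q <- l) q.1 *: q.2 x.

Definition linop (K : fieldType) (L : lmodType K) (u : L -> L) :=
  forall (c : K) x y, u (c *: x + y) = c *: u x + u y.

Lemma LC_ext (K : fieldType) (L : lmodType K) P (f g : L -> L) :
  (forall x, f x = g x) -> LC P f -> LC P g.
Proof. move=> e [l [h1 h2]]; exists l; split=> // x; by rewrite -e h2. Qed.

Lemma LC_single (K : fieldType) (L : lmodType K) (P : (L -> L) -> Prop) f :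
  P f -> LC P f.
Proof.
move=> Pf; exists [:: (1, f)]; split.
  by move=> q [<-|[]].
by move=> x; rewrite big_seq1 scale1r.
Qed.

Lemma LC_zero (K : fieldType) (L : lmodType K) (P : (L -> L) -> Prop) :
  LC P (fun _ => 0).
Proof. by exists [::]; split=> // x; rewrite big_nil. Qed.

Lemma LC_add (K : fieldType) (L : lmodType K) (P : (L -> L) -> Prop) f g :
  LC P f -> LC P g -> LC P (fun x => f x + g x).
Proof.
move=> [l1 [h1 e1]] [l2 [h2 e2]]; exists (l1 ++ l2); split.
  by move=> q /List.in_app_iff [] ?; [apply: h1|apply: h2].
by move=> x; rewrite big_cat /= e1 e2.
Qed.

Lemma In_map (A B : Type) (f : A -> B) (l : seq A) y :
  List.In y (map f l) -> exists x, f x = y /\ List.In x l.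
Proof.
elim: l => [|a l IH] //= [<-|/IH [x [e h]]]; first by exists a; split=> //; left.
by exists x; split=> //; right.
Qed.

Lemma LC_scale (K : fieldType) (L : lmodType K) (P : (L -> L) -> Prop) f (c : K) :
  LC P f -> LC P (fun x => c *: f x).
Proof.
move=> [l [h e]]; exists [seq (c * q.1, q.2) | q <- l]; split.
  by move=> q hq; have [r [<- hr]] := In_map hq; exact: (h r hr).
move=> x; rewrite (big_map _ xpredT (fun q : K * (L -> L) => q.1 *: q.2 x)) /= e scaler_sumr; apply: eq_bigr => q _.
by rewrite scalerA.
Qed.

Lemma LC_sum (K : fieldType) (L : lmodType K) (Q : (L -> L) -> Prop)
  (l : seq (K * (L -> L))) :
  (forall q, List.In q l -> LC Q q.2) ->
  LC Q (fun x => \sum_(q <- l) q.1 *: q.2 x).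
Proof.
elim: l => [|q l IH] h.
  by apply: LC_ext (LC_zero Q) => x; rewrite big_nil.
apply: (LC_ext (f := fun x => q.1 *: q.2 x + \sum_(r <- l) r.1 *: r.2 x)).
  by move=> x; rewrite big_cons.
apply: LC_add; first by apply: LC_scale; apply: h; left.
by apply: IH => r hr; apply: h; right.
Qed.

Lemma LC_mono (K : fieldType) (L : lmodType K) (P Q : (L -> L) -> Prop) f :
  LC P f -> (forall g, P g -> LC Q g) -> LC Q f.
Proof.
move=> [l [h e]] hPQ; apply: LC_ext (LC_sum (l := l) _) => [x|q hq].
  by rewrite e.
by apply: hPQ; apply: h.
Qed.

Lemma linop0 (K : fieldType) (L : lmodType K) (u : L -> L) : linop u -> u 0 = 0.
Proof.
move=> hu; have := hu 1 0 0; rewrite !scale1r addr0 => e.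
by apply: (addIr (u 0)); rewrite add0r -e.
Qed.

Lemma linop_sum (K : fieldType) (L : lmodType K) (u : L -> L) (l : seq (K * (L -> L))) x :
  linop u -> u (\sum_(q <- l) q.1 *: q.2 x) = \sum_(q <- l) q.1 *: u (q.2 x).
Proof.
move=> hu; elim: l => [|q l IH]; first by rewrite !big_nil linop0.
by rewrite !big_cons hu IH.
Qed.

Lemma linop_lsum (K : fieldType) (L : lmodType K) (l : seq (K * (L -> L))) :
  (forall q, List.In q l -> linop q.2) -> linop (fun x => \sum_(q <- l) q.1 *: q.2 x).
Proof.
elim: l => [|q l IH] h c x y.
  by rewrite !big_nil scaler0 addr0.
rewrite !big_cons (h q (or_introl erefl)) IH; last by move=> r hr; apply: h; right.
rewrite scalerDr scalerDr !scalerA mulrC.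
by rewrite -!addrA; congr (_ + _); rewrite addrCA.
Qed.

Lemma LC_linop (K : fieldType) (L : lmodType K) (P : (L -> L) -> Prop) g :
  (forall u, P u -> linop u) -> LC P g -> linop g.
Proof.
move=> hP [l [h e]] c x y; rewrite !e.
by apply: linop_lsum => q hq; apply: hP; apply: h.
Qed.

Lemma LC_comp (K : fieldType) (L : lmodType K) (P1 P2 Q : (L -> L) -> Prop) f g :
  LC P1 f -> LC P2 g -> (forall u, P2 u -> linop u) ->
  (forall f1 g1, P1 f1 -> P2 g1 -> LC Q (fun x => g1 (f1 x))) ->
  LC Q (fun x => g (f x)).
Proof.
move=> [l1 [h1 e1]] Hg hP2 H.
have lg := LC_linop hP2 Hg.
have [l2 [h2 e2]] := Hg.
apply: (LC_ext (f := fun x => \sum_(q <- [seq (q.1, fun y => g (q.2 y)) | q <- l1]) q.1 *: q.2 x)).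
  move=> x; rewrite e1 linop_sum //.
  by rewrite (big_map _ xpredT (fun q : K * (L -> L) => q.1 *: q.2 x)).
apply: LC_sum => q hq; have [r [<- hr]] := In_map hq => /=.
apply: (LC_ext (f := fun x => \sum_(q <- [seq (q.1, fun y => q.2 (r.2 y)) | q <- l2]) q.1 *: q.2 x)).
  move=> x; rewrite e2.
  by rewrite (big_map _ xpredT (fun q : K * (L -> L) => q.1 *: q.2 x)).
apply: LC_sum => q' hq'; have [r' [<- hr']] := In_map hq' => /=.
exact: (H _ _ (h1 r hr) (h2 r' hr')).
Qed.


Lemma In_nth (T : Type) (l : seq T) d i : (i < size l)%N -> List.In (nth d l i) l.
Proof.
elim: l i => [|x l IH] [|i] //= h; first by left.
by right; apply: IH.
Qed.

Lemma LC_lin_comb (K : fieldType) (L : lmodType K) (P : (L -> L) -> Prop) f :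
  LC P f -> lin_comb_of P f.
Proof.
move=> [l [h e]].
pose d : K * (L -> L) := (0, fun x => x).
exists (size l), (fun j => (nth d l j).1), (fun j => (nth d l j).2); split.
  by move=> j; apply: h; apply: In_nth.
move=> x; rewrite e (big_nth d) big_mkord //.
Qed.

Lemma opprod_cat (T : Type) (l1 l2 : seq (T -> T)) x :
  opprod (l1 ++ l2) x = opprod l2 (opprod l1 x).
Proof. by rewrite /opprod foldl_cat. Qed.

Lemma opprod_nseq (T : Type) (f : T -> T) n x : opprod (nseq n f) x = iter n f x.
Proof. by elim: n x => [|n IH] x //; rewrite iterSr -IH. Qed.

Lemma nseq_rcons1 (T : Type) (x : T) n : nseq n x ++ [:: x] = nseq n.+1 x.
Proof. by elim: n => //= n ->. Qed.

Lemma opprod_lin (K : fieldType) (L : lmodType K) (l : seq (L -> L)) :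
  (forall u, List.In u l -> linop u) -> linop (opprod l).
Proof.
elim/last_ind: l => [|l u IH] h c x y //.
rewrite -cats1 !opprod_cat /=.
have hu : linop u by apply: h; rewrite -cats1; apply: List.in_or_app; right; left.
rewrite IH ?hu //.
by move=> v hv; apply: h; rewrite -cats1; apply: List.in_or_app; left.
Qed.

Lemma opprod0 (K : fieldType) (L : lmodType K) (l : seq (L -> L)) :
  (forall u, List.In u l -> linop u) -> opprod l 0 = 0.
Proof. by move=> h; apply: linop0; apply: opprod_lin. Qed.


Lemma br_addl (K : fieldType) (L : lmodType K) (br : L -> L -> L) :
  is_lie_bracket br -> forall x y z, br (x + y) z = br x z + br y z.
Proof. by case=> h1 _ _ _ x y z; rewrite -[x]scale1r h1 !scale1r. Qed.

Lemma br_addr (K : fieldType) (L : lmodType K) (br : L -> L -> L) :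
  is_lie_bracket br -> forall x y z, br z (x + y) = br z x + br z y.
Proof. by case=> _ h2 _ _ x y z; rewrite -[x]scale1r h2 !scale1r. Qed.

Lemma br_anti (K : fieldType) (L : lmodType K) (br : L -> L -> L) :
  is_lie_bracket br -> forall x y, br x y = - br y x.
Proof.
move=> H x y; have := H => -[_ _ h3 _].
have := h3 (x + y); rewrite (br_addl H) !(br_addr H) !h3 add0r addr0 => /eqP.
by rewrite addr_eq0 => /eqP.
Qed.

Lemma br0l (K : fieldType) (L : lmodType K) (br : L -> L -> L) :
  is_lie_bracket br -> forall y, br 0 y = 0.
Proof.
move=> H y; have := br_addl H 0 0 y; rewrite addr0 => e.
by apply: (addIr (br 0 y)); rewrite add0r -e.
Qed.

Lemma br_oppl (K : fieldType) (L : lmodType K) (br : L -> L -> L) :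
  is_lie_bracket br -> forall x y, br (- x) y = - br x y.
Proof.
move=> H x y; apply/eqP; rewrite -addr_eq0 -(br_addl H) addNr.
by rewrite (br0l H).
Qed.

Lemma br_ad_comm (K : fieldType) (L : lmodType K) (br : L -> L -> L) :
  is_lie_bracket br -> forall x u s, br x (br u s) = br (br x u) s - br (br x s) u.
Proof.
move=> H x u s; have := H => -[_ _ _ h4].
have := h4 x u s; rewrite (br_anti H (br u s) x) (br_anti H s x) (br_oppl H).
rewrite -addrA => /eqP; rewrite addr_eq0 opprD !opprK => /eqP ->.
by rewrite addrK.
Qed.

Lemma ad_lin (K : fieldType) (L : lmodType K) (br : L -> L -> L) :
  is_lie_bracket br -> forall u, linop (ad br u).
Proof. by case=> h1 _ _ _ u c x y; rewrite /ad h1. Qed.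

Lemma In_nseq (T : Type) (v u : T) n : List.In u (nseq n v) -> u = v.
Proof. by elim: n => //= n IH [->|/IH]. Qed.

Definition Edef (K : fieldType) (L : lmodType K) (br : L -> L -> L) (s a : L) (j : nat)
  (f : L -> L) : Prop :=
  exists p, (p <= j)%N /\
    f = opprod (nseq p (ad br s) ++ ad br a :: nseq (j - p) (ad br s)).

Lemma Edef_lin (K : fieldType) (L : lmodType K) (br : L -> L -> L) (H : is_lie_bracket br)
  s a j f : Edef br s a j f -> linop f.
Proof.
move=> [p [_ ->]]; apply: opprod_lin => u hu.
case: (List.in_app_or _ _ _ hu) => [h|[h|h]].
- by rewrite (In_nseq h); exact: ad_lin.
- by rewrite -h; exact: ad_lin.
- by rewrite (In_nseq h); exact: ad_lin.
Qed.

Lemma ad_expand (K : fieldType) (L : lmodType K) (br : L -> L -> L) (H : is_lie_bracket br)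
  s a j : LC (Edef br s a j) (ad br (comm_pow br a s j)).
Proof.
elim: j => [|j IH].
  apply: (LC_ext (f := opprod (nseq 0 (ad br s) ++ ad br a :: nseq (0 - 0) (ad br s)))) => //.
  by apply: LC_single; exists 0%N.
set u := comm_pow br a s j.
apply: (LC_ext (f := fun x => ad br s (ad br u x) + (-1) *: ad br u (ad br s x))).
  by move=> x; rewrite scaleN1r /ad /= (br_ad_comm H).
apply: LC_add.
  apply: (LC_comp (P2 := fun g => g = ad br s) IH (LC_single _)) => //.
    by move=> g ->; exact: ad_lin.
  move=> f1 g1 [p [hp ->]] ->; apply: LC_single; exists p; split; first by apply: leqW.
  apply: functional_extensionality => x.
  by rewrite subSn // -nseq_rcons1 -cat_cons catA [RHS]opprod_cat.
apply: (LC_scale (f := fun x => ad br u (ad br s x))).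
apply: (LC_comp (P1 := fun g => g = ad br s) (LC_single _) IH) => //.
  by move=> g; apply: Edef_lin.
move=> f1 g1 -> [p [hp ->]]; apply: LC_single; exists p.+1; split => //.
Qed.

Definition blk (K : fieldType) (L : lmodType K) (br : L -> L -> L) (s : L) (a : nat -> L)
  (k : nat) (p : nat -> nat) (m : nat) : seq (L -> L) :=
  nseq (p m) (ad br s) ++ ad br (a m) :: nseq (k - 1 - p m) (ad br s).

Definition Gdef (K : fieldType) (L : lmodType K) (br : L -> L -> L) (s : L) (a : nat -> L)
  (k n : nat) (f : L -> L) : Prop :=
  exists p : nat -> nat, (forall m, p m <= k - 1)%N /\
    f = opprod (flatten [seq blk br s a k p m | m <- iota 1 n]).

Lemma prod_expand (K : fieldType) (L : lmodType K) (br : L -> L -> L) (H : is_lie_bracket br)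
  s a k n :
  LC (Gdef br s a k n) (opprod [seq ad br (comm_pow br (a m) s (k - 1)) | m <- iota 1 n]).
Proof.
elim: n => [|n IH].
  by apply: LC_single; exists (fun _ => 0%N).
apply: (LC_ext (f := fun x => ad br (comm_pow br (a n.+1) s (k - 1))
  (opprod [seq ad br (comm_pow br (a m) s (k - 1)) | m <- iota 1 n] x))).
  by move=> x; rewrite -addn1 iotaD map_cat opprod_cat add1n addn1.
apply: (LC_comp (g := ad br (comm_pow br (a n.+1) s (k - 1))) IH (ad_expand H s (a n.+1) (k - 1))).
  by move=> g; apply: Edef_lin.
move=> f1 g1 [p [hp ->]] [q [hq ->]]; apply: LC_single.
exists (fun m => if m == n.+1 then q else p m); split.
  by move=> m; case: eqP.
apply: functional_extensionality => x.
rewrite -addn1 iotaD map_cat flatten_cat add1n /= cats0 addn1.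
have -> : [seq blk br s a k (fun m => if m == n.+1 then q else p m) m | m <- iota 1 n]
  = [seq blk br s a k p m | m <- iota 1 n].
  apply/eq_in_map => m; rewrite mem_iota => /andP [_ hm].
  by rewrite /blk ifN //; apply/eqP; lia.
rewrite /blk eqxx !opprod_cat; reflexivity.
Qed.


Lemma pigeon (P : nat -> nat) k t : (0 < k)%N ->
  (forall j, (j < k * t)%N -> (P j.+1 <= P j)%N) -> P 0%N = (k - 1)%N ->
  exists b, (b < k)%N /\ forall j, (b * t <= j <= b * t + t)%N -> P j = P (b * t)%N.
Proof.
move=> hk hm h0.
have mono : forall i j, (i <= j <= k * t)%N -> (P j <= P i)%N.
  move=> i; elim=> [|j IH] /andP [h1 h2].
    by have -> : i = 0%N by lia.
  case: (ltngtP i j.+1) => [hl|hl|->] //; last by lia.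
  apply: leq_trans (hm j _) (IH _); lia.
have [b [hb hge]] : exists b, (b < k)%N /\ (P (b * t) <= P (b * t + t))%N.
  apply: NNPP => hn.
  have hlt : forall b, (b < k)%N -> (P (b * t + t) < P (b * t))%N.
    by move=> b hb; rewrite ltnNge; apply/negP => h; apply: hn; exists b.
  have : forall c, (c <= k)%N -> (P (c * t) + c <= P 0)%N.
    elim=> [|c IH] hc; first by rewrite mul0n addn0 leqnn.
    have := hlt c (ltac:(lia)); have := IH (ltac:(lia)).
    have -> : (c.+1 * t = c * t + t)%N by rewrite mulSn addnC.
    lia.
  by move/(_ k (leqnn k)); rewrite h0; lia.
exists b; split => // j hj.
have h1 : (b * t + t <= k * t)%N by nia.
apply/eqP; rewrite eqn_leq; apply/andP; split.
  by apply: mono; lia.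
apply: leq_trans hge _; apply: mono; lia.
Qed.

Definition goodl (K : fieldType) (L : lmodType K) (br : L -> L -> L) (s : L) (a : nat -> L)
  (N : nat) (l : seq (L -> L)) : Prop :=
  forall u, List.In u l -> u = ad br s \/ exists m, (1 <= m <= N)%N /\ u = ad br (a m).

Lemma goodl_cat (K : fieldType) (L : lmodType K) (br : L -> L -> L) s a N l1 l2 :
  goodl br s a N l1 -> goodl br s a N l2 -> goodl br s a N (l1 ++ l2).
Proof. by move=> h1 h2 u hu; case: (List.in_app_or _ _ _ hu) => [/h1|/h2]. Qed.

Lemma goodl_nseq (K : fieldType) (L : lmodType K) (br : L -> L -> L) s a N n :
  goodl br s a N (nseq n (ad br s)).
Proof. by move=> u hu; rewrite (In_nseq hu); left. Qed.

Lemma goodl_cons (K : fieldType) (L : lmodType K) (br : L -> L -> L) s a N m l :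
  (1 <= m <= N)%N -> goodl br s a N l -> goodl br s a N (ad br (a m) :: l).
Proof. by move=> hm h u [<-|/h //]; right; exists m. Qed.

Lemma goodl_blk (K : fieldType) (L : lmodType K) (br : L -> L -> L) s a N k P m :
  (1 <= m <= N)%N -> goodl br s a N (blk br s a k P m).
Proof.
move=> hm; apply: goodl_cat; first exact: goodl_nseq.
by apply: goodl_cons => //; apply: goodl_nseq.
Qed.

Lemma goodl_flat (K : fieldType) (L : lmodType K) (br : L -> L -> L) s a N k P n :
  forall lo, (1 <= lo)%N -> (lo + n <= N.+1)%N ->
  goodl br s a N (flatten [seq blk br s a k P m | m <- iota lo n]).
Proof.
elim: n => [|n IH] lo h1 h2; first by move=> u [].
rewrite /=; apply: goodl_cat; first by apply: goodl_blk; lia.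
by apply: IH; lia.
Qed.

Lemma goodl_opprod0 (K : fieldType) (L : lmodType K) (br : L -> L -> L)
  (H : is_lie_bracket br) s a N l : goodl br s a N l -> opprod l 0 = 0.
Proof.
move=> h; apply: opprod0 => u /h [->|[m [_ ->]]]; exact: ad_lin.
Qed.

Lemma zero_word (K : fieldType) (L : lmodType K) (br : L -> L -> L)
  (H : is_lie_bracket br) (I : L -> Prop) (HI : is_lie_ideal br I) s k
  (Hnil : forall x, I x -> comm_pow br x s k = 0) a N b X Y e x :
  I b -> goodl br s a N Y ->
  opprod (X ++ ad br b :: nseq (k + e) (ad br s) ++ Y) x = 0.
Proof.
move=> hb hY; rewrite opprod_cat /= nseqD !opprod_cat !opprod_nseq.
set y := opprod X x.
have hI : I (br y b).
  case: HI => h0 hc hid.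
  rewrite (br_anti H) -scaleN1r -[_ *: _]addr0; apply: hc; [exact: hid|exact: h0].
change (iter k (ad br s) (ad br b y)) with (comm_pow br (br y b) s k).
rewrite Hnil //.
have -> : forall n, iter n (ad br s) 0 = 0.
  by elim=> //= n ->; rewrite /ad (br0l H).
exact: goodl_opprod0 H _ _ _ _ hY.
Qed.

Lemma goodl_nil (K : fieldType) (L : lmodType K) (br : L -> L -> L) s a N :
  goodl br s a N [::].
Proof. by move=> u []. Qed.

Lemma prefix_split (K : fieldType) (L : lmodType K) (br : L -> L -> L) s a k N P n1 :
  (n1 <= N)%N -> P 0%N = (k - 1)%N ->
  exists pre, goodl br s a N pre /\
    flatten [seq blk br s a k P m | m <- iota 1 n1] = pre ++ nseq (k - 1 - P n1) (ad br s).
Proof.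
case: n1 => [|n] hn h0.
  by exists [::]; split; [exact: goodl_nil | rewrite h0 subnn].
have -> : iota 1 n.+1 = iota 1 n ++ [:: n.+1] by rewrite -[n.+1]addn1 iotaD /= add1n addn1.
rewrite map_cat flatten_cat /= cats0.
exists (flatten [seq blk br s a k P m | m <- iota 1 n] ++ nseq (P n.+1) (ad br s)
  ++ [:: ad br (a n.+1)]); split.
  apply: goodl_cat; first by apply: goodl_flat; lia.
  apply: goodl_cat; first exact: goodl_nseq.
  by apply: goodl_cons; [lia | exact: goodl_nil].
by rewrite /blk -!catA.
Qed.

Lemma suffix_split (K : fieldType) (L : lmodType K) (br : L -> L -> L) s a k N P n3 :
  forall lo, (1 <= lo)%N -> (lo + n3 = N.+1)%N -> P N.+1 = 0%N ->
  exists suf, goodl br s a N suf /\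
    flatten [seq blk br s a k P m | m <- iota lo n3] = nseq (P lo) (ad br s) ++ suf.
Proof.
case: n3 => [|n] lo h1 h2 h3.
  exists [::]; split; first exact: goodl_nil.
  have -> : lo = N.+1 by lia.
  by rewrite h3.
exists (ad br (a lo) :: nseq (k - 1 - P lo) (ad br s) ++
  flatten [seq blk br s a k P m | m <- iota lo.+1 n]); split.
  apply: goodl_cons; first lia.
  apply: goodl_cat; first exact: goodl_nseq.
  by apply: goodl_flat; lia.
by rewrite /= /blk -catA.
Qed.

Lemma flatten_shift (T : Type) (X : seq T) (F : nat -> seq T) (ms : seq nat) :
  flatten [seq X ++ F m | m <- ms] ++ X = X ++ flatten [seq F m ++ X | m <- ms].
Proof.
elim: ms => [|m ms IH] /=; first by rewrite cats0.
by rewrite -!catA IH.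
Qed.

Lemma classify (K : fieldType) (L : lmodType K) (br : L -> L -> L)
    (H : is_lie_bracket br) (I : L -> Prop) (HI : is_lie_ideal br I)
    (s : L) (k : nat) (hk : (2 <= k)%N)
    (Hnil : forall x, I x -> comm_pow br x s k = 0)
    (t : nat) (ht : (2 <= t)%N) (a : nat -> L)
    (Ha : forall m, (1 <= m <= k * t - 1)%N -> I (a m)) f :
  Gdef br s a k (k * t - 1) f -> LC (special_op br s a k t (k * t - 1)) f.
Proof.
move=> [p [hp ->]].
have hkt : (4 <= k * t)%N by nia.
move: Ha; set N := (k * t - 1)%N => Ha.
have hN : (N.+1 = k * t)%N by rewrite /N; lia.
pose P j := if j == 0%N then (k - 1)%N else if (j <= N)%N then p j else 0%N.
have hP0 : P 0%N = (k - 1)%N by [].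
have hPN : P N.+1 = 0%N by rewrite /P /= ltnn.
have hPle : forall j, (P j <= k - 1)%N.
  by move=> j; rewrite /P; case: eqP => // _; case: ifP.
have eblk : flatten [seq blk br s a k p m | m <- iota 1 N]
          = flatten [seq blk br s a k P m | m <- iota 1 N].
  congr flatten; apply/eq_in_map => m; rewrite mem_iota => /andP [h1 h2].
  rewrite /blk /P; case: eqP => [e|_]; first by rewrite e in h1.
  by rewrite ifT //; lia.
rewrite eblk.
case: (classic (exists j, (j <= N)%N /\ (P j < P j.+1)%N)) => [[j [hj hlt]] | hno].
  have hj1 : (1 <= j)%N.
    case: j hj hlt => // _; rewrite hP0 => h; have := hPle 1%N; lia.
  have hjN : (j < N)%N.
    case: (ltngtP j N) => // e; [lia | by move: hlt; rewrite e hPN].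
  apply: LC_ext (LC_zero _) => x; symmetry.
  have eI : iota 1 N = iota 1 (j - 1) ++ j :: j.+1 :: iota j.+2 (N - j - 1).
    have eN : N = ((j - 1) + (N - j - 1).+2)%N by lia.
    rewrite {1}eN iotaD.
    by have -> : (1 + (j - 1) = j)%N by lia.
  rewrite eI map_cat flatten_cat /= /blk -!catA /=.
  rewrite catA (catA (nseq (k - 1 - P j) _)) -nseqD.
  have -> : (k - 1 - P j + P j.+1 = k + (k - 1 - P j + P j.+1 - k))%N.
    by have := hPle j; lia.
  apply: (zero_word H HI Hnil (N := N)); first by apply: Ha; lia.
  apply: goodl_cons; first lia.
  apply: goodl_cat; first exact: goodl_nseq.
  by apply: (goodl_flat (k := k) (P := P)); lia.
have hmono : forall j, (j < k * t)%N -> (P j.+1 <= P j)%N.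
  move=> j hj; rewrite leqNgt; apply/negP => h; apply: hno; exists j; split => //; lia.
have hk0 : (0 < k)%N by lia.
have [b [hb hc]] := @pigeon P k t hk0 hmono hP0.
have hbt : (b * t + t <= k * t)%N by nia.
have [pre [hpre epre]] := @prefix_split K L br s a k N P (b * t) (ltac:(lia)) hP0.
have [suf [hsuf esuf]] := @suffix_split K L br s a k N P (N.+1 - (b * t + t))
  (b * t + t) (ltac:(lia)) (ltac:(lia)) hPN.
set c := P (b * t)%N.
have hcle : (c <= k - 1)%N by apply: hPle.
have eI : iota 1 N = iota 1 (b * t) ++ iota (b * t).+1 (t - 1)
                      ++ iota (b * t + t) (N.+1 - (b * t + t)).
  have eN : N = (b * t + ((t - 1) + (N.+1 - (b * t + t))))%N by lia.
  rewrite {1}eN !iotaD add1n.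
  by have -> : ((b * t).+1 + (t - 1) = b * t + t)%N by lia.
have emid : [seq blk br s a k P m | m <- iota (b * t).+1 (t - 1)]
  = [seq nseq c (ad br s) ++ (ad br (a m) :: nseq (k - 1 - c) (ad br s)) | m <- iota (b * t).+1 (t - 1)].
  apply/eq_in_map => m; rewrite mem_iota => /andP [h1 h2].
  by rewrite /blk hc //; lia.
apply: LC_single.
exists (b * t).+1, pre, suf; split => //; first by lia.
rewrite eI !map_cat !flatten_cat epre esuf emid.
have -> : P (b * t + t)%N = c by rewrite hc //; lia.
rewrite -/c -!catA (catA (flatten _) (nseq c _)).
rewrite (flatten_shift (nseq c (ad br s)) (fun m => ad br (a m) :: nseq (k - 1 - c) (ad br s))).
rewrite -(catA (nseq c _)) (catA (nseq (k - 1 - c) _)) -nseqD subnK //.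
have -> : iota (b * t).+1 (t - 1) = [seq (b * t).+1 + j | j <- iota 0 (t - 1)]%N.
  by rewrite -iotaDl addn0.
rewrite -map_comp /=.
congr (opprod (pre ++ _ ++ _) ); congr (_ ++ _); congr flatten; apply: eq_map => j /=.
by rewrite -nseqD subnK.
Qed.

Unset Implicit Arguments.

Theorem lemma7 (K : fieldType) (L : lmodType K) (br : L -> L -> L)
    (Hlie : is_lie_bracket br) (I : L -> Prop) (HI : is_lie_ideal br I)
    (s : L) (k : nat) (hk : (2 <= k)%N)
    (Hnil : forall x, I x -> comm_pow br x s k = 0)
    (t : nat) (ht : (2 <= t)%N) (a : nat -> L)
    (Ha : forall m, (1 <= m <= k * t - 1)%N -> I (a m)) :
  lin_comb_of (special_op br s a k t (k * t - 1))
    (opprod [seq ad br (comm_pow br (a m) s (k - 1)) | m <- iota 1 (k * t - 1)]).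
Proof.
apply: LC_lin_comb.
apply: (LC_mono (prod_expand Hlie s a k (k * t - 1))).
exact: (classify Hlie HI hk Hnil ht Ha).
Qed.
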